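(* Let $I\subset\mathbb{R}$ be an interval and let $f,g:I\to\mathbb{R}$ be nowhere-vanishing $C^2$ functions, $\beta\in C^1(I,\mathbb{R})$, and $H_1,H_2:I\to\mathbb{R}$ continuous. Put $$a(t)=\frac{1}{4f}\Big(4\beta^2+2\dot\beta+2\beta\frac{\dot f}{f}-4\beta\frac{\dot g}{g}+(\ln|f|)_{tt}+g\Big(\frac1g\Big)_{tt}-(\ln|f|)_t(\ln|g|)_t\Big)$$ and $h(x,t)=a(t)x^2+H_1(t)x+H_2(t)+i\beta(t)$. Let $\epsilon,\epsilon_1\in\{1,-1\}$ with $\epsilon\, g(t)/f(t)>0$ on $I$, and let $T_1>0$, $T_2,\xi_0,\xi_1,\theta_0\in\mathbb{R}$. Choose differentiable functions on $I$ with $\dot B=2\beta$, $\dot P=\frac{g^2}{f}e^{-2B}$, $\dot{\mathcal I}=\frac{f}{g}e^{B}H_1$, $\dot J=\frac{g^2}{f}e^{-2B}\mathcal I$, $\dot L=\frac{g^2}{f}e^{-2B}\mathcal I^2$, $\dot M=H_2$, and define $$T(t)=T_1P(t)+T_2,\qquad X(x,t)=\epsilon_1\sqrt{T_1}\,\frac{g}{f}e^{-B}x-2\epsilon_1\sqrt{T_1}\,J+\xi_0T_1P+\xi_1,$$ $$R(t)=e^{-B}\Big(\epsilon T_1\frac{g}{f}\Big)^{1/2},$$ $$\theta(x,t)=\frac{1}{4f}\Big(2\beta+\frac{\dot f}{f}-\frac{\dot g}{g}\Big)x^2+\frac{g}{f}e^{-B}\Big(\mathcal I-\frac{\epsilon_1\xi_0\sqrt{T_1}}{2}\Big)x-L-\frac{\xi_0^2T_1}{4}P+\epsilon_1\xi_0\sqrt{T_1}\,J+M+\theta_0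 .$$ If $\tilde\psi(\tilde x,\tilde t)$ is a solution (continuously differentiable in $\tilde t$, twice continuously differentiable in $\tilde x$) of $$i\tilde\psi_{\tilde t}+\tilde\psi_{\tilde x\tilde x}+\epsilon|\tilde\psi|^2\tilde\psi=0$$ on a domain containing $\{(X(x,t),T(t)):x\in\mathbb{R},t\in I\}$, then $$\psi(x,t)=R(t)\,e^{i\theta(x,t)}\,\tilde\psi\big(X(x,t),T(t)\big)$$ is a solution on $\mathbb{R}\times I$ of $$i\psi_t+f(t)\psi_{xx}+g(t)|\psi|^2\psi+h(x,t)\psi=0 .$$
   Context: Here $\dot{}$ denotes $d/dt$. The functions $B,P,\mathcal I,J,L,M$ are any antiderivatives satisfying the stated differential relations (with $\mathcal I$ computed from the chosen $B$, $J,L$ from the chosen $B,\mathcal I$). *)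

(* Defs.v *)
From Stdlib Require Import Reals.
From Coquelicot Require Import Coquelicot.
Open Scope R_scope.

Definition cexpi (th : R) : C := (cos th, sin th).

Definition in_interval (lo hi : Rbar) (t : R) : Prop :=
  Rbar_lt lo t /\ Rbar_lt t hi.

Definition C2_on (lo hi : Rbar) (f : R -> R) : Prop :=
  forall t, in_interval lo hi t ->
    ex_derive f t /\ ex_derive (Derive f) t /\ continuous (Derive_n f 2) t.

Definition C1_on (lo hi : Rbar) (f : R -> R) : Prop :=
  forall t, in_interval lo hi t -> ex_derive f t /\ continuous (Derive f) t.

Definition C0_on (lo hi : Rbar) (f : R -> R) : Prop :=
  forall t, in_interval lo hi t -> continuous f t.

Definition has_partials (D : R -> R -> Prop) (psi pt px pxx : R -> R -> C) : Prop :=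
  forall x t, D x t ->
    is_derive (fun s => psi x s) t (pt x t) /\
    is_derive (fun y => psi y t) x (px x t) /\
    is_derive (fun y => px y t) x (pxx x t).

Definition jcont_on (D : R -> R -> Prop) (phi : R -> R -> C) : Prop :=
  forall x t, D x t -> continuous (fun p : R * R => phi (fst p) (snd p)) (x, t).

Definition coef_a (f g beta : R -> R) (t : R) : R :=
  / (4 * f t) *
  (4 * beta t ^ 2 + 2 * Derive beta t
   + 2 * beta t * (Derive f t / f t)
   - 4 * beta t * (Derive g t / g t)
   + Derive_n (fun s => ln (Rabs (f s))) 2 t
   + g t * Derive_n (fun s => / g s) 2 t
   - Derive (fun s => ln (Rabs (f s))) t * Derive (fun s => ln (Rabs (g s))) t).

Definition coef_h (f g beta H1 H2 : R -> R) (x t : R) : C :=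
  (coef_a f g beta t * x ^ 2 + H1 t * x + H2 t, beta t).

Definition trT (T1 T2 : R) (P : R -> R) (t : R) : R := T1 * P t + T2.

Definition trX (eps1 T1 xi0 xi1 : R) (f g B J P : R -> R) (x t : R) : R :=
  eps1 * sqrt T1 * (g t / f t) * exp (- B t) * x
  - 2 * eps1 * sqrt T1 * J t + xi0 * T1 * P t + xi1.

Definition trR (eps T1 : R) (f g B : R -> R) (t : R) : R :=
  exp (- B t) * sqrt (eps * T1 * (g t / f t)).

Definition trTheta (eps1 T1 xi0 theta0 : R) (f g beta B II J L M P : R -> R)
  (x t : R) : R :=
  / (4 * f t) * (2 * beta t + Derive f t / f t - Derive g t / g t) * x ^ 2
  + g t / f t * exp (- B t) * (II t - eps1 * xi0 * sqrt T1 / 2) * x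
  - L t - xi0 ^ 2 * T1 / 4 * P t + eps1 * xi0 * sqrt T1 * J t + M t + theta0.

(* Main.v *)
Require Import Defs.
From Stdlib Require Import Reals.
From Coquelicot Require Import Coquelicot.
Open Scope R_scope.
From Stdlib Require Import Lra.

Lemma isd_fst (F : R -> C) t (l : C) :
  is_derive F t l -> is_derive (fun s => fst (F s)) t (fst l).
Proof.
  intros H.
  assert (Hl : filterdiff (fun y : prod_NormedModule R_AbsRing R_NormedModule R_NormedModule => fst y) (locally (F t)) (fun y => fst y)).
  { apply filterdiff_linear. apply is_linear_fst. }
  unfold is_derive.
  eapply filterdiff_ext_lin.
  - apply (filterdiff_comp' F (fun y => fst y) t _ _ H Hl).
  - intros y. reflexivity.
Qed.

Lemma isd_snd (F : R -> C) t (l : C) :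
  is_derive F t l -> is_derive (fun s => snd (F s)) t (snd l).
Proof.
  intros H.
  assert (Hl : filterdiff (fun y : prod_NormedModule R_AbsRing R_NormedModule R_NormedModule => snd y) (locally (F t)) (fun y => snd y)).
  { apply filterdiff_linear. apply is_linear_snd. }
  unfold is_derive.
  eapply filterdiff_ext_lin.
  - apply (filterdiff_comp' F (fun y => snd y) t _ _ H Hl).
  - intros y. reflexivity.
Qed.

Lemma isd_pair (u v : R -> R) t du dv :
  is_derive u t du -> is_derive v t dv ->
  is_derive (fun s => (u s, v s) : C) t ((du, dv) : C).
Proof.
  intros Hu Hv.
  assert (H1 := @is_derive_scal_l R_AbsRing (prod_NormedModule R_AbsRing R_NormedModule R_NormedModule) u t du (1,0) Hu).
  assert (H2 := @is_derive_scal_l R_AbsRing (prod_NormedModule R_AbsRing R_NormedModule R_NormedModule) v t dv (0,1) Hv).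
  assert (H := is_derive_plus _ _ _ _ _ H1 H2).
  replace ((du,dv) : C) with (plus (scal du ((1,0):prod_NormedModule R_AbsRing R_NormedModule R_NormedModule)) (scal dv ((0,1) : prod_NormedModule R_AbsRing R_NormedModule R_NormedModule))).
  - eapply is_derive_ext; [|exact H].
    intros s. simpl. unfold plus, scal; simpl.
    unfold prod_plus, prod_scal; simpl.
    unfold plus, scal, mult; simpl. unfold mult; simpl. f_equal; ring.
  - simpl. unfold plus, scal; simpl.
    unfold prod_plus, prod_scal; simpl.
    unfold plus, scal, mult; simpl. unfold mult; simpl. f_equal; ring.
Qed.

Lemma isd_split (F : R -> C) t (l : C) :
  is_derive (fun s => fst (F s)) t (fst l) ->
  is_derive (fun s => snd (F s)) t (snd l) -> is_derive F t l.
Proof.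
  intros H1 H2. destruct l as [l1 l2].
  eapply is_derive_ext; [|exact (isd_pair _ _ _ _ _ H1 H2)].
  intros s. simpl. destruct (F s); reflexivity.
Qed.

Lemma isdR_mult (f g : R -> R) x df dg :
  is_derive f x df -> is_derive g x dg ->
  is_derive (fun t => f t * g t) x (df * g x + f x * dg).
Proof. intros; apply Derive.is_derive_mult; auto. Qed.

Lemma isdR_minus (f g : R -> R) x df dg :
  is_derive f x df -> is_derive g x dg ->
  is_derive (fun t => f t - g t) x (df - dg).
Proof. intros H1 H2. apply (is_derive_minus f g x df dg H1 H2). Qed.

Lemma isdR_plus (f g : R -> R) x df dg :
  is_derive f x df -> is_derive g x dg ->
  is_derive (fun t => f t + g t) x (df + dg).
Proof. intros H1 H2. apply (is_derive_plus f g x df dg H1 H2). Qed.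

Lemma isd_val {V : NormedModule R_AbsRing} (f : R -> V) x l l' :
  is_derive f x l -> l = l' -> is_derive f x l'.
Proof. intros H ->; exact H. Qed.

Lemma isd_Cmult (u v : R -> C) t du dv :
  is_derive u t du -> is_derive v t dv ->
  is_derive (fun s => (u s * v s)%C) t (du * v t + u t * dv)%C.
Proof.
  intros Hu Hv.
  assert (Hu1 := isd_fst _ _ _ Hu). assert (Hu2 := isd_snd _ _ _ Hu).
  assert (Hv1 := isd_fst _ _ _ Hv). assert (Hv2 := isd_snd _ _ _ Hv).
  apply isd_split.
  -     eapply isd_val.
    eapply is_derive_ext; [| apply (isdR_minus _ _ _ _ _ (isdR_mult _ _ _ _ _ Hu1 Hv1) (isdR_mult _ _ _ _ _ Hu2 Hv2))].
    { intros s. reflexivity. }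
    destruct du, dv, (u t), (v t). simpl. ring.
  -     eapply isd_val.
    eapply is_derive_ext; [| apply (isdR_plus _ _ _ _ _ (isdR_mult _ _ _ _ _ Hu1 Hv2) (isdR_mult _ _ _ _ _ Hu2 Hv1))].
    { intros s. reflexivity. }
    destruct du, dv, (u t), (v t). simpl. ring.
Qed.

Lemma isd_RtoC (r : R -> R) t dr :
  is_derive r t dr -> is_derive (fun s => RtoC (r s)) t (RtoC dr).
Proof.
  intros H. apply (isd_pair r (fun _ => 0) t dr 0 H).
  apply (@is_derive_const R_AbsRing R_NormedModule 0 t).
Qed.

Ltac scalR := unfold scal; simpl; unfold mult; simpl.

Lemma isd_cexpi (th : R -> R) t d :
  is_derive th t d ->
  is_derive (fun s => cexpi (th s)) t (cexpi (th t) * (Ci * RtoC d))%C.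
Proof.
  intros H. unfold cexpi.
  assert (Hc : is_derive (fun s => cos (th s)) t (- sin (th t) * d)).
  { eapply isd_val; [apply (is_derive_comp cos th t _ _ (is_derive_cos _) H)|].
    scalR. ring. }
  assert (Hs : is_derive (fun s => sin (th s)) t (cos (th t) * d)).
  { eapply isd_val; [apply (is_derive_comp sin th t _ _ (is_derive_sin _) H)|].
    scalR. ring. }
  eapply isd_val; [apply (isd_pair _ _ _ _ _ Hc Hs)|].
  unfold Cmult, Ci, RtoC; simpl. f_equal; ring.
Qed.

Lemma chain_comp (F : R -> R -> R) (dfx : R -> R -> R) (dfy : R) (x y : R) (u v : R -> R) t du dv :
  u t = x -> v t = y ->
  locally (x, y) (fun p : R * R => is_derive (fun z => F z (snd p)) (fst p) (dfx (fst p) (snd p))) ->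
  is_derive (fun z => F x z) y dfy ->
  continuous (fun p : R * R => dfx (fst p) (snd p)) (x, y) ->
  is_derive u t du -> is_derive v t dv ->
  is_derive (fun s => F (u s) (v s)) t (dfx x y * du + dfy * dv).
Proof.
  intros Hu Hv Hloc Hy Hc Hdu Hdv.
  assert (Hfd := is_derive_filterdiff F x y dfx dfy Hloc Hy Hc).
  assert (Hfd2 : filterdiff (fun p : R * R => F (fst p) (snd p)) (locally (x, y))
                   (fun p : R * R => fst p * dfx x y + snd p * dfy)).
  { eapply filterdiff_ext_lin; [exact Hfd|]. intros [a b]. simpl.
    unfold plus, scal; simpl. unfold mult; simpl. ring. }
  apply filterdiff_differentiable_pt_lim in Hfd2.
  apply is_derive_Reals.
  apply is_derive_Reals in Hdu. apply is_derive_Reals in Hdv.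
  subst x y.
  apply (derivable_pt_lim_comp_2d F u v t _ _ _ _ Hfd2 Hdu Hdv).
Qed.

Lemma chain2 (D : R -> R -> Prop) psi pt px pxx
  (HD : open (fun p : R * R => D (fst p) (snd p)))
  (Hp : has_partials D psi pt px pxx) (Hc : jcont_on D px)
  (u v : R -> R) t du dv :
  D (u t) (v t) -> is_derive u t du -> is_derive v t dv ->
  is_derive (fun s => psi (u s) (v s)) t
    (RtoC du * px (u t) (v t) + RtoC dv * pt (u t) (v t))%C.
Proof.
  intros HDt Hdu Hdv.
  assert (Hloc : locally (u t, v t) (fun p : R * R => D (fst p) (snd p))).
  { apply HD. exact HDt. }
  destruct (Hp _ _ HDt) as [Hpt [Hpx _]].
  apply isd_split.
  - eapply isd_val.
    + apply (chain_comp (fun a b => fst (psi a b)) (fun a b => fst (px a b)) (fst (pt (u t) (v t))) (u t) (v t) u v t du dv eq_refl eq_refl).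
      * eapply filter_imp; [|exact Hloc]. intros p Hp'.
        destruct (Hp _ _ Hp') as [_ [Hx _]]. apply (isd_fst _ _ _ Hx).
      * apply (isd_fst _ _ _ Hpt).
      * apply (continuous_comp (fun p : R * R => px (fst p) (snd p)) fst).
        -- apply Hc. exact HDt.
        -- destruct (px (fst (u t, v t)) (snd (u t, v t))). apply continuous_fst.
      * exact Hdu.
      * exact Hdv.
    + simpl. ring.
  - eapply isd_val.
    + apply (chain_comp (fun a b => snd (psi a b)) (fun a b => snd (px a b)) (snd (pt (u t) (v t))) (u t) (v t) u v t du dv eq_refl eq_refl).
      * eapply filter_imp; [|exact Hloc]. intros p Hp'.
        destruct (Hp _ _ Hp') as [_ [Hx _]]. apply (isd_snd _ _ _ Hx).
      * apply (isd_snd _ _ _ Hpt).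
      * apply (continuous_comp (fun p : R * R => px (fst p) (snd p)) snd).
        -- apply Hc. exact HDt.
        -- destruct (px (fst (u t, v t)) (snd (u t, v t))). apply continuous_snd.
      * exact Hdu.
      * exact Hdv.
    + simpl. ring.
Qed.

Lemma interval_loc lo hi t : in_interval lo hi t -> locally t (in_interval lo hi).
Proof.
  intros [H1 H2].
  assert (Ho : open (fun u : R => Rbar_lt lo u /\ Rbar_lt u hi)).
  { apply open_and; [apply open_Rbar_gt | apply open_Rbar_lt]. }
  apply Ho. split; auto.
Qed.

Lemma lnabs_d (f : R -> R) s :
  f s <> 0 -> ex_derive f s ->
  is_derive (fun u => ln (Rabs (f u))) s (Derive f s / f s).
Proof.
  intros Hf0 Hf1.
  assert (Ha : is_derive (fun u => Rabs (f u)) s (sign (f s) * Derive f s)).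
  { apply is_derive_Rabs; auto. apply Derive_correct; auto. }
  assert (Hpos : 0 < Rabs (f s)) by (apply Rabs_pos_lt; auto).
  eapply isd_val; [apply (is_derive_comp ln (fun u => Rabs (f u)) s _ _ (is_derive_ln _ Hpos) Ha)|].
  unfold scal; simpl; unfold mult; simpl.
  destruct (Rlt_or_le 0 (f s)) as [Hp|Hn].
  - rewrite (sign_eq_1 _ Hp), Rabs_right by lra. field; auto.
  - assert (Hn' : f s < 0) by lra.
    rewrite (sign_eq_m1 _ Hn'), Rabs_left by lra. field; auto.
Qed.

Lemma E_lnabs1 (f : R -> R) t :
  f t <> 0 -> ex_derive f t ->
  Derive (fun s => ln (Rabs (f s))) t = Derive f t / f t.
Proof. intros; apply is_derive_unique, lnabs_d; auto. Qed.

Lemma E_lnabs2 (f : R -> R) t :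
  locally t (fun s => f s <> 0 /\ ex_derive f s) -> ex_derive (Derive f) t ->
  Derive_n (fun s => ln (Rabs (f s))) 2 t = (Derive (Derive f) t * f t - Derive f t ^ 2) / f t ^ 2.
Proof.
  intros Hloc Hf2.
  destruct (locally_singleton _ _ Hloc) as [Hf0 Hf1].
  simpl.
  rewrite (Derive_ext_loc _ (fun s => Derive f s / f s)).
  - apply is_derive_unique. auto_derive.
    + repeat split; auto.
    + change (fun x0 : R => f x0) with f.
      change (fun x0 : R => Derive f x0) with (Derive f). field; auto.
  - eapply filter_imp; [|exact Hloc]. intros s [H1 H2].
    apply is_derive_unique, lnabs_d; auto.
Qed.

Lemma E_inv2 (g : R -> R) t :
  locally t (fun s => g s <> 0 /\ ex_derive g s) -> ex_derive (Derive g) t ->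
  Derive_n (fun s => / g s) 2 t = - Derive (Derive g) t / g t ^ 2 + 2 * Derive g t ^ 2 / g t ^ 3.
Proof.
  intros Hloc Hg2.
  destruct (locally_singleton _ _ Hloc) as [Hg0 Hg1].
  simpl.
  rewrite (Derive_ext_loc _ (fun s => - Derive g s / g s ^ 2)).
  - apply is_derive_unique. auto_derive.
    + repeat split; auto.
    + change (fun x0 : R => g x0) with g.
      change (fun x0 : R => Derive g x0) with (Derive g). field; auto.
  - eapply filter_imp; [|exact Hloc]. intros s [H1 H2].
    apply is_derive_unique. auto_derive.
    + split; auto.
    + change (fun x0 : R => g x0) with g. field; auto.
Qed.

Lemma final_alg (Rv thx thxx tht Xx Xt Td f g beta reh eps n : R) (e Ps Px Pt Pxx : C) :
  Rv <> 0 ->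
  tht = -f*thx^2 + reh -> Xt = -2*f*thx*Xx -> Td = f*Xx^2 -> g*Rv^2 = eps*f*Xx^2 ->
  Pt = (Ci*(Pxx + RtoC eps * RtoC n * Ps))%C ->
  (Ci * ((RtoC (-Rv*(f*thxx+beta)) * e + RtoC Rv*(e*(Ci*RtoC tht))) * Ps
         + RtoC Rv * e * (RtoC Xt * Px + RtoC Td * Pt))
   + RtoC f * (RtoC Rv * e * (Ci*RtoC thx * (Ci*RtoC thx*Ps + RtoC Xx*Px)
        + (Ci*RtoC thxx*Ps + Ci*RtoC thx*(RtoC Xx*Px) + RtoC Xx*(RtoC Xx*Pxx))))
   + RtoC g * RtoC (Rv^2 * n) * (RtoC Rv * e * Ps)
   + ((reh, beta) : C) * (RtoC Rv * e * Ps) = 0)%C.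
Proof.
  intros HR Htht HXt HTd Hg HPt.
  assert (Hg' : g = eps*f*Xx^2 / Rv^2) by (rewrite <- Hg; field; auto).
  subst g tht Xt Td Pt.
  destruct e as [c s], Ps as [p1 p2], Px as [q1 q2], Pxx as [r1 r2].
  unfold Cmult, Cplus, Ci, RtoC; simpl.
  apply injective_projections; simpl; field; auto.
Qed.

Definition thxx (f g beta : R -> R) t :=
  2 * (/ (4 * f t) * (2 * beta t + Derive f t / f t - Derive g t / g t)).
Definition thx eps1 T1 xi0 (f g beta B II : R -> R) x t :=
  thxx f g beta t * x + g t / f t * exp (- B t) * (II t - eps1 * xi0 * sqrt T1 / 2).
Definition Xx eps1 T1 (f g B : R -> R) t := eps1 * sqrt T1 * (g t / f t) * exp (- B t).

Lemma theta_t (f g beta H1 H2 B P II J L M : R -> R) eps1 T1 xi0 theta0 x t :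
  f t <> 0 -> g t <> 0 -> ex_derive f t -> ex_derive (Derive f) t ->
  ex_derive g t -> ex_derive (Derive g) t -> ex_derive beta t ->
  is_derive B t (2 * beta t) ->
  is_derive P t (g t ^ 2 / f t * exp (-2 * B t)) ->
  is_derive II t (f t / g t * exp (B t) * H1 t) ->
  is_derive J t (g t ^ 2 / f t * exp (-2 * B t) * II t) ->
  is_derive L t (g t ^ 2 / f t * exp (-2 * B t) * II t ^ 2) ->
  is_derive M t (H2 t) ->
  (eps1 = 1 \/ eps1 = -1) -> 0 < T1 ->
  Derive_n (fun s => ln (Rabs (f s))) 2 t = (Derive (Derive f) t * f t - Derive f t ^ 2) / f t ^ 2 ->
  Derive (fun s => ln (Rabs (f s))) t = Derive f t / f t ->
  Derive (fun s => ln (Rabs (g s))) t = Derive g t / g t ->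
  Derive_n (fun s => / g s) 2 t = - Derive (Derive g) t / g t ^ 2 + 2 * Derive g t ^ 2 / g t ^ 3 ->
  is_derive (fun s => trTheta eps1 T1 xi0 theta0 f g beta B II J L M P x s) t
    (- f t * thx eps1 T1 xi0 f g beta B II x t ^ 2 + (coef_a f g beta t * x ^ 2 + H1 t * x + H2 t)).
Proof.
  intros Hf0 Hg0 Hf1 Hf2 Hg1 Hg2 Hb HB HP HII HJ HL HM He1 HT1 E1 E2 E3 E4.
  unfold coef_a. rewrite E1, E2, E3, E4.
  unfold trTheta.
  auto_derive.
  - repeat split; auto; eexists; eauto.
  - replace (Derive (fun x0 : R => B x0) t) with (2 * beta t) by (symmetry; apply is_derive_unique; exact HB).
    replace (Derive (fun x0 : R => P x0) t) with (g t ^ 2 / f t * exp (-2 * B t)) by (symmetry; apply is_derive_unique; exact HP).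
    replace (Derive (fun x0 : R => II x0) t) with (f t / g t * exp (B t) * H1 t) by (symmetry; apply is_derive_unique; exact HII).
    replace (Derive (fun x0 : R => J x0) t) with (g t ^ 2 / f t * exp (-2 * B t) * II t) by (symmetry; apply is_derive_unique; exact HJ).
    replace (Derive (fun x0 : R => L x0) t) with (g t ^ 2 / f t * exp (-2 * B t) * II t ^ 2) by (symmetry; apply is_derive_unique; exact HL).
    replace (Derive (fun x0 : R => M x0) t) with (H2 t) by (symmetry; apply is_derive_unique; exact HM).
    change (fun x0 : R => f x0) with f. change (fun x0 : R => g x0) with g.
    change (fun x0 : R => beta x0) with beta.
    change (fun x0 : R => Derive f x0) with (Derive f).
    change (fun x0 : R => Derive g x0) with (Derive g).
    replace (exp (-2 * B t)) with (exp (- B t) * exp (- B t))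
      by (rewrite <- exp_plus; f_equal; ring).
    replace (exp (B t)) with (/ exp (- B t)) by (rewrite exp_Ropp; field; apply Rgt_not_eq, exp_pos).
    assert (HE : exp (- B t) <> 0) by (apply Rgt_not_eq, exp_pos).
    assert (Hq : sqrt T1 * sqrt T1 = T1) by (apply sqrt_sqrt; lra).
    unfold thx, thxx.
    generalize (Derive beta t) (Derive (Derive f) t) (Derive (Derive g) t) HE.
    generalize (exp (- B t)) (sqrt T1) Hq.
    intros E q Hq' b1 f2 g2 HE'. subst T1.
    destruct He1; subst eps1; field; auto.
Qed.
Lemma R_t (f g beta B : R -> R) (eps T1 t : R) :
  f t <> 0 -> g t <> 0 -> ex_derive f t -> ex_derive g t ->
  is_derive B t (2 * beta t) -> (eps = 1 \/ eps = -1) -> 0 < T1 ->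
  eps * (g t / f t) > 0 ->
  is_derive (fun s => trR eps T1 f g B s) t
    (- trR eps T1 f g B t * (f t * thxx f g beta t + beta t)).
Proof.
  intros Hf0 Hg0 Hf1 Hg1 HB He HT1 Hs.
  assert (HS : 0 < eps * T1 * (g t / f t)).
  { replace (eps * T1 * (g t / f t)) with (T1 * (eps * (g t / f t))) by ring.
    apply Rmult_lt_0_compat; lra. }
  unfold trR, thxx.
  auto_derive.
  - repeat split; auto. eexists; eauto.
  - replace (Derive (fun x0 : R => B x0) t) with (2 * beta t) by (symmetry; apply is_derive_unique; exact HB).
    change (fun x0 : R => f x0) with f. change (fun x0 : R => g x0) with g.
    assert (HE : exp (- B t) <> 0) by (apply Rgt_not_eq, exp_pos).
    assert (Hq : sqrt (eps * T1 * (g t / f t)) * sqrt (eps * T1 * (g t / f t)) = eps * T1 * (g t / f t)) by (apply sqrt_sqrt; lra).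
    assert (Hq0 : sqrt (eps * T1 * (g t / f t)) <> 0) by (apply Rgt_not_eq, sqrt_lt_R0; lra).
    generalize (exp (- B t)) HE. intros E HE'.
    change (g t * / f t) with (g t / f t).
    generalize (sqrt (eps * T1 * (g t / f t))) Hq Hq0. intros q Hq' Hq0'.
    assert (HT : T1 = q * q * f t / (g t * eps)).
    { rewrite Hq'. destruct He as [-> | ->]; field; auto. }
    subst T1.
    destruct He; subst eps; field; auto.
Qed.
Lemma X_t (f g beta B P II J : R -> R) (eps1 T1 xi0 xi1 x t : R) :
  f t <> 0 -> g t <> 0 -> ex_derive f t -> ex_derive g t ->
  is_derive B t (2 * beta t) ->
  is_derive P t (g t ^ 2 / f t * exp (-2 * B t)) ->
  is_derive J t (g t ^ 2 / f t * exp (-2 * B t) * II t) ->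
  (eps1 = 1 \/ eps1 = -1) -> 0 < T1 ->
  is_derive (fun s => trX eps1 T1 xi0 xi1 f g B J P x s) t
    (-2 * f t * thx eps1 T1 xi0 f g beta B II x t * Xx eps1 T1 f g B t).
Proof.
  intros Hf0 Hg0 Hf1 Hg1 HB HP HJ He1 HT1.
  unfold trX, thx, thxx, Xx.
  auto_derive.
  - repeat split; auto; eexists; eauto.
  - replace (Derive (fun x0 : R => B x0) t) with (2 * beta t) by (symmetry; apply is_derive_unique; exact HB).
    replace (Derive (fun x0 : R => P x0) t) with (g t ^ 2 / f t * exp (-2 * B t)) by (symmetry; apply is_derive_unique; exact HP).
    replace (Derive (fun x0 : R => J x0) t) with (g t ^ 2 / f t * exp (-2 * B t) * II t) by (symmetry; apply is_derive_unique; exact HJ).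
    change (fun x0 : R => f x0) with f. change (fun x0 : R => g x0) with g.
    replace (exp (-2 * B t)) with (exp (- B t) * exp (- B t))
      by (rewrite <- exp_plus; f_equal; ring).
    assert (HE : exp (- B t) <> 0) by (apply Rgt_not_eq, exp_pos).
    assert (Hq : sqrt T1 * sqrt T1 = T1) by (apply sqrt_sqrt; lra).
    generalize (exp (- B t)) HE. intros E HE'.
    generalize (sqrt T1) Hq. intros q Hq'. subst T1.
    destruct He1; subst eps1; field; auto.
Qed.

Lemma T_t (f g B P : R -> R) (eps1 T1 T2 t : R) :
  f t <> 0 -> is_derive P t (g t ^ 2 / f t * exp (-2 * B t)) ->
  (eps1 = 1 \/ eps1 = -1) -> 0 < T1 ->
  is_derive (trT T1 T2 P) t (f t * Xx eps1 T1 f g B t ^ 2).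
Proof.
  intros Hf0 HP He1 HT1. unfold trT, Xx.
  auto_derive.
  - eexists; eauto.
  - replace (Derive (fun x0 : R => P x0) t) with (g t ^ 2 / f t * exp (-2 * B t)) by (symmetry; apply is_derive_unique; exact HP).
    replace (exp (-2 * B t)) with (exp (- B t) * exp (- B t))
      by (rewrite <- exp_plus; f_equal; ring).
    assert (Hq : sqrt T1 * sqrt T1 = T1) by (apply sqrt_sqrt; lra).
    generalize (exp (- B t)). intros E.
    generalize (sqrt T1) Hq. intros q Hq'. subst T1.
    destruct He1; subst eps1; field; auto.
Qed.

Lemma theta_x (f g beta B P II J L M : R -> R) (eps1 T1 xi0 theta0 x t : R) :
  is_derive (fun y => trTheta eps1 T1 xi0 theta0 f g beta B II J L M P y t) x
    (thx eps1 T1 xi0 f g beta B II x t).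
Proof.
  unfold trTheta, thx, thxx. auto_derive; auto. ring.
Qed.

Lemma thx_x (f g beta B II : R -> R) (eps1 T1 xi0 x t : R) :
  is_derive (fun y => thx eps1 T1 xi0 f g beta B II y t) x (thxx f g beta t).
Proof.
  unfold thx. auto_derive; auto. ring.
Qed.

Lemma X_x (f g B J P : R -> R) (eps1 T1 xi0 xi1 x t : R) :
  is_derive (fun y => trX eps1 T1 xi0 xi1 f g B J P y t) x (Xx eps1 T1 f g B t).
Proof.
  unfold trX, Xx. auto_derive; auto. ring.
Qed.

Lemma gR2 (f g B : R -> R) (eps eps1 T1 t : R) :
  f t <> 0 -> (eps = 1 \/ eps = -1) -> (eps1 = 1 \/ eps1 = -1) -> 0 < T1 ->
  eps * (g t / f t) > 0 ->
  g t * trR eps T1 f g B t ^ 2 = eps * f t * Xx eps1 T1 f g B t ^ 2.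
Proof.
  intros Hf0 He He1 HT1 Hs. unfold trR, Xx.
  assert (HS : 0 <= eps * T1 * (g t / f t)).
  { replace (eps * T1 * (g t / f t)) with (T1 * (eps * (g t / f t))) by ring.
    apply Rmult_le_pos; lra. }
  assert (Hq : sqrt T1 * sqrt T1 = T1) by (apply sqrt_sqrt; lra).
  replace ((exp (- B t) * sqrt (eps * T1 * (g t / f t))) ^ 2)
    with (exp (- B t) ^ 2 * (sqrt (eps * T1 * (g t / f t)) * sqrt (eps * T1 * (g t / f t)))) by ring.
  rewrite sqrt_sqrt by exact HS.
  generalize (sqrt T1) Hq. intros q Hq'. rewrite <- Hq'.
  destruct He1, He; subst; field; auto.
Qed.

Lemma trR_nz (f g B : R -> R) (eps T1 t : R) :
  0 < T1 -> eps * (g t / f t) > 0 -> trR eps T1 f g B t <> 0.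
Proof.
  intros HT1 Hs. unfold trR. apply Rgt_not_eq.
  apply Rmult_lt_0_compat; [apply exp_pos|]. apply sqrt_lt_R0.
  replace (eps * T1 * (g t / f t)) with (T1 * (eps * (g t / f t))) by ring.
  apply Rmult_lt_0_compat; lra.
Qed.

Lemma isd_Cconst (c : C) (t : R) : is_derive (fun _ : R => c) t (RtoC 0).
Proof.
  apply isd_split; simpl; apply (@is_derive_const R_AbsRing R_NormedModule).
Qed.

Lemma isd_Cplus (u v : R -> C) t du dv :
  is_derive u t du -> is_derive v t dv ->
  is_derive (fun s => (u s + v s)%C) t (du + dv)%C.
Proof. intros H1 H2. apply (is_derive_plus u v t du dv H1 H2). Qed.

Lemma chain1 (F : R -> C) (u : R -> R) x du dF :
  is_derive F (u x) dF -> is_derive u x du ->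
  is_derive (fun y => F (u y)) x (RtoC du * dF)%C.
Proof.
  intros HF Hu. eapply isd_val; [apply (is_derive_comp F u x _ _ HF Hu)|].
  destruct dF. unfold scal; simpl. unfold prod_scal; simpl. unfold scal; simpl; unfold mult; simpl.
  unfold Cmult, RtoC; simpl. f_equal; ring.
Qed.

Lemma Cmod_psi (r th : R) (p : C) :
  (Cmod (RtoC r * cexpi th * p) ^ 2 = r ^ 2 * Cmod p ^ 2)%R.
Proof.
  rewrite !Cmod_mult.
  assert (H : Cmod (cexpi th) = 1).
  { assert (E : cos th ^ 2 + sin th ^ 2 = 1).
    { pose proof (sin2_cos2 th) as H. unfold Rsqr in H. simpl. lra. }
    unfold cexpi, Cmod. simpl fst. simpl snd. rewrite E. apply sqrt_1. }
  rewrite H, Cmod_R. rewrite <- (pow2_abs r). ring.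
Qed.

Theorem mainTheorem2
  (lo hi : Rbar) (f g beta H1 H2 : R -> R)
  (Hf : C2_on lo hi f) (Hg : C2_on lo hi g)
  (Hf0 : forall t, in_interval lo hi t -> f t <> 0)
  (Hg0 : forall t, in_interval lo hi t -> g t <> 0)
  (Hbeta : C1_on lo hi beta) (HH1 : C0_on lo hi H1) (HH2 : C0_on lo hi H2)
  (eps eps1 : R) (Heps : eps = 1 \/ eps = -1) (Heps1 : eps1 = 1 \/ eps1 = -1)
  (Hsign : forall t, in_interval lo hi t -> eps * (g t / f t) > 0)
  (T1 T2 xi0 xi1 theta0 : R) (HT1 : T1 > 0)
  (B P II J L M : R -> R)
  (HB : forall t, in_interval lo hi t -> is_derive B t (2 * beta t))
  (HP : forall t, in_interval lo hi t ->
          is_derive P t (g t ^ 2 / f t * exp (-2 * B t)))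
  (HII : forall t, in_interval lo hi t ->
          is_derive II t (f t / g t * exp (B t) * H1 t))
  (HJ : forall t, in_interval lo hi t ->
          is_derive J t (g t ^ 2 / f t * exp (-2 * B t) * II t))
  (HL : forall t, in_interval lo hi t ->
          is_derive L t (g t ^ 2 / f t * exp (-2 * B t) * II t ^ 2))
  (HM : forall t, in_interval lo hi t -> is_derive M t (H2 t))
  (D : R -> R -> Prop) (HDopen : open (fun p : R * R => D (fst p) (snd p)))
  (HDcont : forall x t, in_interval lo hi t ->
     D (trX eps1 T1 xi0 xi1 f g B J P x t) (trT T1 T2 P t))
  (psit : R -> R -> C)
  (Hpsit : exists pt px pxx : R -> R -> C,
     has_partials D psit pt px pxx /\
     jcont_on D psit /\ jcont_on D pt /\ jcont_on D px /\ jcont_on D pxx /\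
     (forall x t, D x t ->
        (Ci * pt x t + pxx x t
         + RtoC eps * RtoC (Cmod (psit x t) ^ 2) * psit x t = 0)%C)) :
  let psi := fun x t =>
    (RtoC (trR eps T1 f g B t)
     * cexpi (trTheta eps1 T1 xi0 theta0 f g beta B II J L M P x t)
     * psit (trX eps1 T1 xi0 xi1 f g B J P x t) (trT T1 T2 P t))%C in
  exists pt px pxx : R -> R -> C,
    has_partials (fun _ t => in_interval lo hi t) psi pt px pxx /\
    (forall x t, in_interval lo hi t ->
       (Ci * pt x t + RtoC (f t) * pxx x t
        + RtoC (g t) * RtoC (Cmod (psi x t) ^ 2) * psi x t
        + coef_h f g beta H1 H2 x t * psi x t = 0)%C).
Proof.

  intros psi.
  destruct Hpsit as [pt0 [px0 [pxx0 [Hp [Hc0 [Hct [Hcx [Hcxx HNLS]]]]]]]].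
  assert (He1' : eps1 = 1 \/ eps1 = -1) by exact Heps1.
  exists (fun x t =>
    ((RtoC (- trR eps T1 f g B t * (f t * thxx f g beta t + beta t))
       * cexpi (trTheta eps1 T1 xi0 theta0 f g beta B II J L M P x t)
      + RtoC (trR eps T1 f g B t)
        * (cexpi (trTheta eps1 T1 xi0 theta0 f g beta B II J L M P x t)
           * (Ci * RtoC (- f t * thx eps1 T1 xi0 f g beta B II x t ^ 2
                + (coef_a f g beta t * x ^ 2 + H1 t * x + H2 t)))))
     * psit (trX eps1 T1 xi0 xi1 f g B J P x t) (trT T1 T2 P t)
     + RtoC (trR eps T1 f g B t) * cexpi (trTheta eps1 T1 xi0 theta0 f g beta B II J L M P x t)
       * (RtoC (-2 * f t * thx eps1 T1 xi0 f g beta B II x t * Xx eps1 T1 f g B t)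
            * px0 (trX eps1 T1 xi0 xi1 f g B J P x t) (trT T1 T2 P t)
          + RtoC (f t * Xx eps1 T1 f g B t ^ 2)
            * pt0 (trX eps1 T1 xi0 xi1 f g B J P x t) (trT T1 T2 P t)))%C).
  exists (fun x t =>
    (RtoC (trR eps T1 f g B t) * cexpi (trTheta eps1 T1 xi0 theta0 f g beta B II J L M P x t)
     * (Ci * RtoC (thx eps1 T1 xi0 f g beta B II x t)
          * psit (trX eps1 T1 xi0 xi1 f g B J P x t) (trT T1 T2 P t)
        + RtoC (Xx eps1 T1 f g B t) * px0 (trX eps1 T1 xi0 xi1 f g B J P x t) (trT T1 T2 P t)))%C).
  exists (fun x t =>
    (RtoC (trR eps T1 f g B t) * cexpi (trTheta eps1 T1 xi0 theta0 f g beta B II J L M P x t)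
     * (Ci * RtoC (thx eps1 T1 xi0 f g beta B II x t)
         * (Ci * RtoC (thx eps1 T1 xi0 f g beta B II x t)
              * psit (trX eps1 T1 xi0 xi1 f g B J P x t) (trT T1 T2 P t)
            + RtoC (Xx eps1 T1 f g B t) * px0 (trX eps1 T1 xi0 xi1 f g B J P x t) (trT T1 T2 P t))
        + (Ci * RtoC (thxx f g beta t) * psit (trX eps1 T1 xi0 xi1 f g B J P x t) (trT T1 T2 P t)
           + Ci * RtoC (thx eps1 T1 xi0 f g beta B II x t)
               * (RtoC (Xx eps1 T1 f g B t) * px0 (trX eps1 T1 xi0 xi1 f g B J P x t) (trT T1 T2 P t))
           + RtoC (Xx eps1 T1 f g B t)
               * (RtoC (Xx eps1 T1 f g B t) * pxx0 (trX eps1 T1 xi0 xi1 f g B J P x t) (trT T1 T2 P t)))))%C).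
  split.
  - intros x t Ht. subst psi. cbv beta.
    assert (Hloc := interval_loc _ _ _ Ht).
    destruct (Hf t Ht) as [Hf1 [Hf2 _]].
    destruct (Hg t Ht) as [Hg1 [Hg2 _]].
    destruct (Hbeta t Ht) as [Hb1 _].
    assert (HDt := HDcont x t Ht).
    destruct (Hp _ _ HDt) as [Hpt [Hpx Hpxx]].
    split; [|split].
    +
      eapply isd_val; [apply isd_Cmult|].
      * eapply isd_val; [apply isd_Cmult|].
        -- apply isd_RtoC. apply R_t; auto.
        -- apply isd_cexpi. apply theta_t; auto.
           ++ apply E_lnabs2; auto. eapply filter_imp; [|exact Hloc].
              intros s Hs. split; [apply Hf0; auto | apply Hf; auto].
           ++ apply E_lnabs1; auto.
           ++ apply E_lnabs1; auto.
           ++ apply E_inv2; auto. eapply filter_imp; [|exact Hloc].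
              intros s Hs. split; [apply Hg0; auto | apply Hg; auto].
        -- reflexivity.
      * apply (chain2 D psit pt0 px0 pxx0 HDopen Hp Hcx); auto.
        -- apply X_t; auto; eexists; eauto.
        -- apply (T_t f g B P eps1); auto.
      * reflexivity.
    +
      eapply isd_val.
      * apply isd_Cmult.
        -- apply isd_Cmult.
           ++ apply isd_Cconst.
           ++ apply isd_cexpi. apply theta_x.
        -- apply (chain1 (fun z => psit z (trT T1 T2 P t)) (fun y => trX eps1 T1 xi0 xi1 f g B J P y t)).
           ++ exact Hpx.
           ++ apply X_x.
      * apply injective_projections; unfold Cmult, Cplus, Ci, RtoC; simpl; ring.
    +
      eapply isd_val.
      * apply isd_Cmult.
        -- apply isd_Cmult.
           ++ apply isd_Cconst.
           ++ apply isd_cexpi. apply theta_x.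
        -- apply isd_Cplus.
           ++ apply isd_Cmult.
              ** apply isd_Cmult; [apply isd_Cconst | apply isd_RtoC, thx_x].
              ** apply (chain1 (fun z => psit z (trT T1 T2 P t)) (fun y => trX eps1 T1 xi0 xi1 f g B J P y t)).
                 --- exact Hpx.
                 --- apply X_x.
           ++ apply isd_Cmult; [apply isd_Cconst|].
              apply (chain1 (fun z => px0 z (trT T1 T2 P t)) (fun y => trX eps1 T1 xi0 xi1 f g B J P y t)).
              --- exact Hpxx.
              --- apply X_x.
      * apply injective_projections; unfold Cmult, Cplus, Ci, RtoC; simpl; ring.
  - intros x t Ht. subst psi. cbv beta.
    rewrite Cmod_psi.
    assert (HDt := HDcont x t Ht).
    assert (HN := HNLS _ _ HDt).
    unfold coef_h.
    apply final_alg with (eps := eps) (Xx := Xx eps1 T1 f g B t).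
    + apply trR_nz; auto.
    + reflexivity.
    + reflexivity.
    + reflexivity.
    + apply gR2; auto.
    + revert HN.
      generalize (pt0 (trX eps1 T1 xi0 xi1 f g B J P x t) (trT T1 T2 P t)).
      generalize (pxx0 (trX eps1 T1 xi0 xi1 f g B J P x t) (trT T1 T2 P t)).
      generalize (psit (trX eps1 T1 xi0 xi1 f g B J P x t) (trT T1 T2 P t)).
      intros [a1 a2] [b1 b2] [c1 c2] HN.
      revert HN. generalize (Cmod (a1, a2) ^ 2). intros n HN.
      pose proof (f_equal fst HN) as E1. pose proof (f_equal snd HN) as E2.
      unfold Cmult, Cplus, Ci, RtoC in *; simpl in *.
      apply injective_projections; simpl. all: lra.
Qed.
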